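(* Let $m,n$ be nonzero integers with $|m|<|n|$ such that $m$ does not divide $n$. Let $u_1,u_2$ be vertices of type $a$ of $\Lambda_{m,n}$ with $u_1<u_2$ or $u_2<u_1$. Then $u_1$ and $u_2$ correspond to adjacent vertices of $T$ if and only if there does not exist any vertex $u_3\in\Lambda_{m,n}^{(0)}\setminus\{u_1,u_2\}$ such that $\mathrm{lk}_\Lambda(u_1)\cap \mathrm{lk}_\Lambda(u_2)\subseteq \mathrm{lk}_\Lambda(u_3)$.
   Context: $\mathrm{BS}(m,n)=\langle a,t\mid ta^mt^{-1}=a^n\rangle$; $\Upsilon_{m,n}$ is its Cayley graph for $\{a,t\}$ (edges $g\to gs$ oriented, labeled $s$); $a$-lines and $t$-lines are the subgraphs spanned by left cosets of $\langle a\rangle$ and $\langle t\rangle$. $\Lambda_{m,n}$ has one vertex per $a$-line or $t$-line (of type $a$ or $t$), adjacent when the lines intersect; $\mathrm{lk}_\Lambda(u)$ is the set of neighbours of $u$. $T$ is the Bass–Serre tree whose vertices are the $a$-lines (= type-$a$ vertices), with one edge oriented from $\ell$ to $\ell'$ for each pair of $a$-lines such that $gt\in\ell'$ for some $g\in\ell$. Partial order: $v_1\le v_2$ if every edge of the geodesic from $v_1$ to $v_2$ in $T$ is oriented toward $v_2$; $<$ denotes strict order. *)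

(* Defs.v *)
(* Baumslag-Solitar group BS(m,n) = <a,t | t a^m t^-1 = a^n>,
   modelled by words in the generators modulo the congruence generated by
   free cancellation and the defining relator. *)
From mathcomp Require Import all_boot all_order all_algebra.
Set Implicit Arguments. Unset Strict Implicit. Unset Printing Implicit Defensive.
Import Order.TTheory GRing.Theory Num.Theory.

Inductive letter := LA | LAi | LT | LTi.

Definition linv (x : letter) : letter :=
  match x with LA => LAi | LAi => LA | LT => LTi | LTi => LT end.

Definition word := seq letter.

Definition apow (k : int) : word :=
  match k with Posz j => nseq j LA | Negz j => nseq j.+1 LAi end.

Definition tpow (k : int) : word :=
  match k with Posz j => nseq j LT | Negz j => nseq j.+1 LTi end.

Inductive bs_eq (m n : int) : word -> word -> Prop :=
| bs_refl w : bs_eq m n w w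
| bs_sym u v : bs_eq m n u v -> bs_eq m n v u
| bs_trans u v w : bs_eq m n u v -> bs_eq m n v w -> bs_eq m n u w
| bs_cancel u v x : bs_eq m n (u ++ [:: x; linv x] ++ v) (u ++ v)
| bs_rel u v : bs_eq m n (u ++ (LT :: apow m ++ [:: LTi]) ++ v) (u ++ apow n ++ v).

Definition in_aline (m n : int) (g h : word) : Prop :=
  exists k : int, bs_eq m n h (g ++ apow k).
Definition in_tline (m n : int) (g h : word) : Prop :=
  exists k : int, bs_eq m n h (g ++ tpow k).

(* vertices of Lambda_{m,n}: an a-line or a t-line, given by a representative *)
Inductive lvert := VA of word | VT of word.

Definition line (m n : int) (u : lvert) : word -> Prop :=
  match u with VA g => in_aline m n g | VT g => in_tline m n g end.

Definition same_vert (m n : int) (u v : lvert) : Prop :=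
  match u, v with
  | VA g, VA h => in_aline m n g h
  | VT g, VT h => in_tline m n g h
  | _, _ => False
  end.

Definition ladj (m n : int) (u v : lvert) : Prop :=
  ~ same_vert m n u v /\ exists x, line m n u x /\ line m n v x.

(* Bass-Serre tree T: vertices are a-lines (representatives g),
   oriented edge l -> l' iff some g in l has g t in l'. *)
Definition tedge (m n : int) (l l' : word) : Prop :=
  exists g, in_aline m n l g /\ in_aline m n l' (g ++ [:: LT]).

Definition tadj (m n : int) (l l' : word) : Prop :=
  tedge m n l l' \/ tedge m n l' l.

Fixpoint rpath (e : word -> word -> Prop) (x : word) (p : seq word) : Prop :=
  match p with [::] => True | y :: p' => e x y /\ rpath e y p' end.

(* p is a geodesic of T from v1 to v2 (x :: p lists its vertices) *)
Definition geodesic (m n : int) (v1 v2 : word) (p : seq word) : Prop :=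
  rpath (tadj m n) v1 p /\ in_aline m n v2 (last v1 p) /\
  forall q, rpath (tadj m n) v1 q -> in_aline m n v2 (last v1 q) ->
            size p <= size q.

Definition tle (m n : int) (v1 v2 : word) : Prop :=
  exists p, geodesic m n v1 v2 p /\ rpath (tedge m n) v1 p.

Definition tlt (m n : int) (v1 v2 : word) : Prop :=
  tle m n v1 v2 /\ ~ in_aline m n v1 v2.

(* Main.v *)
Require Import Defs.
From mathcomp Require Import all_boot all_order all_algebra.
From mathcomp Require Import zify.
From Stdlib Require Import Classical_Prop.
Import Order.TTheory GRing.Theory Num.Theory.
Set Implicit Arguments. Unset Strict Implicit. Unset Printing Implicit Defensive.
Lemma bs_catl m n p u v : bs_eq m n u v -> bs_eq m n (p ++ u) (p ++ v).
Proof.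
elim=> {u v} [w|u v _ IH|u v w _ IH1 _ IH2|u v x|u v].
- exact: bs_refl.
- exact: bs_sym.
- exact: bs_trans IH1 IH2.
- by have := bs_cancel m n (p ++ u) v x; rewrite -!catA.
- by have := bs_rel m n (p ++ u) v; rewrite -!catA.
Qed.

Lemma bs_catr m n s u v : bs_eq m n u v -> bs_eq m n (u ++ s) (v ++ s).
Proof.
elim=> {u v} [w|u v _ IH|u v w _ IH1 _ IH2|u v x|u v].
- exact: bs_refl.
- exact: bs_sym.
- exact: bs_trans IH1 IH2.
- by have := bs_cancel m n u (v ++ s) x; rewrite -!catA.
- by have := bs_rel m n u (v ++ s); rewrite -!catA.
Qed.

Lemma bs_cat m n u v u' v' : bs_eq m n u u' -> bs_eq m n v v' ->
  bs_eq m n (u ++ v) (u' ++ v').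
Proof. move=> h1 h2; apply: bs_trans (bs_catr _ h1) (bs_catl _ h2). Qed.

Lemma linvK x : linv (linv x) = x. Proof. by case: x. Qed.

Definition gpow (x : letter) (k : int) : word :=
  match k with Posz j => nseq j x | Negz j => nseq j.+1 (linv x) end.

Lemma apowE k : apow k = gpow LA k. Proof. by case: k. Qed.
Lemma tpowE k : tpow k = gpow LT k. Proof. by case: k. Qed.

Lemma gpow_eq x k l : k = l -> gpow x k = gpow x l. Proof. by move->. Qed.

Lemma bs_cons1 m n x w : bs_eq m n (x :: linv x :: w) w.
Proof. exact: (bs_cancel m n [::] w x). Qed.

Lemma gpow_S m n x k : bs_eq m n (x :: gpow x k) (gpow x (k + 1)%R).
Proof.
case: k => j.
- rewrite (gpow_eq x (_ : (Posz j + 1)%R = Posz j.+1)); last by lia.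
  exact: bs_refl.
- case: j => [|j].
  + rewrite (gpow_eq x (_ : (Negz 0 + 1)%R = Posz 0)); last by lia.
    exact: (bs_cons1 m n x [::]).
  + rewrite (gpow_eq x (_ : (Negz j.+1 + 1)%R = Negz j)); last by lia.
    exact: bs_cons1.
Qed.

Lemma gpow_P m n x k : bs_eq m n (linv x :: gpow x k) (gpow x (k - 1)%R).
Proof.
have h := gpow_S m n x (k - 1)%R.
rewrite (gpow_eq x (_ : (k - 1 + 1)%R = k)) in h; last by lia.
apply: bs_trans (bs_catl [:: linv x] (bs_sym h)) _ => /=.
have := bs_cons1 m n (linv x) (gpow x (k - 1)%R); by rewrite linvK.
Qed.

Lemma gpow_add m n x k l : bs_eq m n (gpow x k ++ gpow x l) (gpow x (k + l)%R).
Proof.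
case: k => j.
- elim: j => [|j IH].
  + rewrite (gpow_eq x (_ : (Posz 0 + l)%R = l)); last by lia. exact: bs_refl.
  + rewrite (gpow_eq x (_ : (Posz j.+1 + l)%R = (Posz j + l) + 1)%R); last by lia.
    apply: bs_trans (gpow_S m n x _).
    exact: (bs_catl [:: x] IH).
- elim: j => [|j IH].
  + rewrite (gpow_eq x (_ : (Negz 0 + l)%R = l - 1)%R); last by lia.
    exact: gpow_P.
  + rewrite (gpow_eq x (_ : (Negz j.+1 + l)%R = (Negz j + l) - 1)%R); last by lia.
    apply: bs_trans (gpow_P m n x _).
    exact: (bs_catl [:: linv x] IH).
Qed.

Definition in_pow m n x g h := exists k, bs_eq m n h (g ++ gpow x k).

Lemma in_pow_refl m n x g : in_pow m n x g g.
Proof. by exists 0%R; rewrite cats0; apply: bs_refl. Qed.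

Lemma in_pow_sym m n x g h : in_pow m n x g h -> in_pow m n x h g.
Proof.
case=> k hk; exists (- k)%R.
apply: bs_sym; apply: bs_trans (bs_catr _ hk) _; rewrite -catA.
apply: bs_trans (bs_catl _ (gpow_add m n x _ _)) _.
rewrite (gpow_eq x (_ : (k + - k)%R = 0%R)); last by lia.
rewrite cats0; exact: bs_refl.
Qed.

Lemma in_pow_trans m n x g h l : in_pow m n x g h -> in_pow m n x h l -> in_pow m n x g l.
Proof.
case=> k hk [j hj]; exists (k + j)%R.
apply: bs_trans hj _; apply: bs_trans (bs_catr _ hk) _; rewrite -catA.
exact: bs_catl (gpow_add m n x _ _).
Qed.

Lemma in_pow_catl m n x p g h : in_pow m n x g h -> in_pow m n x (p ++ g) (p ++ h).
Proof. by case=> k hk; exists k; rewrite -catA; apply: bs_catl. Qed.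

Lemma in_alineE m n g h : in_aline m n g h <-> in_pow m n LA g h.
Proof. by split; case=> k hk; exists k; rewrite ?apowE in hk *. Qed.
Lemma in_tlineE m n g h : in_tline m n g h <-> in_pow m n LT g h.
Proof. by split; case=> k hk; exists k; rewrite ?tpowE in hk *. Qed.
Definition vtx := seq (bool * int).
Definition NN (m n : int) (s : bool) : int := if s then n else m.
Definition MM (m n : int) (s : bool) : int := if s then m else n.

Fixpoint add (m n c : int) (v : vtx) : vtx :=
  match v with
  | [::] => [::]
  | (s, r) :: w => (s, modz (r + c)%R (NN m n s)) ::
                   add m n (divz (r + c)%R (NN m n s) * MM m n s)%R w
  end.

Definition tmul (v : vtx) : vtx :=
  match v with
  | (false, r) :: w => if r == 0%R then w else (true, 0%R) :: v
  | _ => (true, 0%R) :: v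
  end.

Definition tinv (v : vtx) : vtx :=
  match v with
  | (true, r) :: w => if r == 0%R then w else (false, 0%R) :: v
  | _ => (false, 0%R) :: v
  end.

Definition actl (m n : int) (x : letter) (v : vtx) : vtx :=
  match x with
  | LA => add m n 1 v | LAi => add m n (-1) v | LT => tmul v | LTi => tinv v
  end.

Definition act m n (w : word) (v : vtx) : vtx := foldr (actl m n) v w.

Lemma act_cat m n u w v : act m n (u ++ w) v = act m n u (act m n w v).
Proof. by rewrite /act foldr_cat. Qed.

Fixpoint nrm (m n : int) (v : vtx) : Prop :=
  match v with
  | [::] => True
  | (s, r) :: w => (0 <= r < `|NN m n s|)%R /\
      (match w with (s', r') :: _ => s' = s \/ r' != 0%R | [::] => True end) /\
      nrm m n w
  end.

Section Act.
Variables (m n : int) (hm : m != 0%R) (hn : n != 0%R).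

Lemma NN0 s : NN m n s != 0%R. Proof. by case: s. Qed.
Lemma MMN s : MM m n s = NN m n (~~ s). Proof. by case: s. Qed.

Lemma modz_id r s : (0 <= r < `|NN m n s|)%R -> modz r (NN m n s) = r.
Proof. by move=> h; rewrite -modz_abs modz_small. Qed.

Lemma add_add c d v : add m n c (add m n d v) = add m n (d + c)%R v.
Proof.
elim: v c d => [|[s r] w IH] c d //=.
rewrite IH; congr ((_, _) :: add _ _ _ _).
- by rewrite modzDml addrA.
- rewrite -mulrDl; congr (_ * _)%R.
  have e : (r + (d + c) = divz (r + d) (NN m n s) * NN m n s + (modz (r + d) (NN m n s) + c))%R.
    by have := divz_eq (r + d)%R (NN m n s); lia.
  by rewrite e divzMDl ?NN0.
Qed.
End Act.
Section Act2.
Variables (m n : int) (hm : m != 0%R) (hn : n != 0%R).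

Lemma add0 v : nrm m n v -> add m n 0 v = v.
Proof.
elim: v => [|[s r] w IH] //= [hr [_ hw]].
rewrite addr0 modz_id // divz_small; last by rewrite abszE.
by rewrite mul0r IH.
Qed.

Lemma modz_shift r q s s' : s' != s -> (0 <= r < `|NN m n s'|)%R ->
  modz (r + q * MM m n s)%R (NN m n s') = r.
Proof.
move=> ne hr.
have -> : MM m n s = NN m n s' by case: s s' ne {hr} => [] [].
by rewrite addrC modzMDl modz_id.
Qed.

Lemma nrm_add c v : nrm m n v -> nrm m n (add m n c v).
Proof.
elim: v c => [|[s r] w IH] c //= [hr [hh hw]]; split; last split.
- by rewrite modz_ge0 ?NN0 // ltz_mod ?NN0.
- case: w hh hw {IH} => [|[s' r'] w'] //= hh hw.
  case: (eqVneq s' s) => [->|ne]; first by left.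
  case: hh => [/eqP|hr']; first by rewrite (negbTE ne).
  by right; rewrite modz_shift //; case: hw.
- exact: IH.
Qed.

Lemma rng0 s : ((0:int) <= 0 < `|NN m n s|)%R.
Proof. by rewrite lexx /= normr_gt0 NN0. Qed.

Lemma nrm_tmul v : nrm m n v -> nrm m n (tmul v).
Proof.
case: v => [|[s r] w] /=.
- by move=> _; split => //; exact: (rng0 true).
- case: s => /=.
  + move=> h; split; first by exact: (rng0 true).
    by split; [left|].
  + case: eqP => [_ [_ [_ hw]] //|/eqP hr h].
    split; first by exact: (rng0 true).
    by split; [right|].
Qed.

Lemma nrm_tinv v : nrm m n v -> nrm m n (tinv v).
Proof.
case: v => [|[s r] w] /=.
- by move=> _; split => //; exact: (rng0 false).
- case: s => /=.
  + case: eqP => [_ [_ [_ hw]] //|/eqP hr h].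
    split; first by exact: (rng0 false).
    by split; [right|].
  + move=> h; split; first by exact: (rng0 false).
    by split; [left|].
Qed.

Lemma nrm_actl x v : nrm m n v -> nrm m n (actl m n x v).
Proof. case: x => /=; [exact: nrm_add|exact: nrm_add|exact: nrm_tmul|exact: nrm_tinv]. Qed.

Lemma nrm_act w v : nrm m n v -> nrm m n (act m n w v).
Proof. elim: w => [|x w IH] //= hv; exact/nrm_actl/IH. Qed.

Lemma tmul_tinv v : nrm m n v -> tmul (tinv v) = v.
Proof.
case: v => [|[[] r] w] //=.
case: eqP => [->|] //= [_ [hh _]].
case: w hh => [|[s' r'] w'] //=.
by case: s' => //= [[]] // /negbTE ->.
Qed.

Lemma tinv_tmul v : nrm m n v -> tinv (tmul v) = v.
Proof.
case: v => [|[[] r] w] //=.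
case: eqP => [->|] //= [_ [hh _]].
case: w hh => [|[s' r'] w'] //=.
by case: s' => //= [[]] // /negbTE ->.
Qed.

Lemma act_apow k v : nrm m n v -> act m n (apow k) v = add m n k v.
Proof.
move=> hv; case: k => j /=.
- elim: j => [|j IH] /=; first by rewrite add0.
  rewrite IH add_add //; apply: (f_equal (fun k => add m n k v)); lia.
- elim: j => [|j IH] /=; first by [].
  rewrite IH add_add //; apply: (f_equal (fun k => add m n k v)); lia.
Qed.

Lemma act_rel v : nrm m n v ->
  act m n (LT :: apow m ++ [:: LTi]) v = act m n (apow n) v.
Proof.
move=> hv; rewrite /= act_cat /= act_apow; last exact: nrm_tinv.
rewrite act_apow //.
case: v hv => [|[s r] w] /=.
- by move=> _; rewrite add0r modzz eqxx.
- case: s => /=.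
  + case: eqP => [->|hr] [_ [hh hw]] /=.
    * rewrite add0r modzz divzz hn mul1r.
      case: w hh hw => [|[s' r'] w'] //= hh hw.
      case: s' hh hw => //= [[]] // hr' [hr'' _].
      have e : ((r' + m) %% m)%Z = r'.
        by rewrite modzDr -modz_abs modz_small.
      by rewrite e (negbTE hr').
    * by rewrite add0r modzz divzz hm mul1r /= ?eqxx.
  + by move=> _; rewrite add0r modzz divzz hm mul1r /= ?eqxx.
Qed.

Lemma act_cancel x v : nrm m n v -> actl m n x (actl m n (linv x) v) = v.
Proof.
case: x => /= hv.
- rewrite add_add //; rewrite -[RHS]add0 //; apply: (f_equal (fun k => add m n k v)); lia.
- rewrite add_add //; rewrite -[RHS]add0 //; apply: (f_equal (fun k => add m n k v)); lia.
- exact: tmul_tinv.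
- exact: tinv_tmul.
Qed.

Lemma bs_act u w : bs_eq m n u w -> forall v, nrm m n v -> act m n u v = act m n w v.
Proof.
elim=> {u w} [w|u w _ IH|u v w _ IH1 _ IH2|u w x|u w] v0 hv //.
- by rewrite IH.
- by rewrite IH1 // IH2.
- by rewrite !act_cat /= act_cancel //; apply: nrm_act.
- by rewrite !act_cat act_rel //; apply: nrm_act.
Qed.
End Act2.
Definition E (v w : vtx) : Prop :=
  (exists r, w = rcons v (true, r)) \/ (exists r, v = rcons w (false, r)).

Lemma add_rcons m n c v e : exists r', add m n c (rcons v e) = rcons (add m n c v) (e.1, r').
Proof.
elim: v c => [|[s r] w IH] c /=.
- by case: e => s r; eexists.
- by case: (IH (divz (r + c) (NN m n s) * MM m n s)%R) => r' ->; exists r'.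
Qed.

Lemma actl_rcons m n x v e :
  (exists r', actl m n x (rcons v e) = rcons (actl m n x v) (e.1, r')) \/
  (v = [::] /\ actl m n x [:: e] = [::] /\ actl m n x [::] = [:: (~~ e.1, 0%R)]).
Proof.
case: x => /=; try by left; apply: add_rcons.
- case: v => [|[s r] w] /=.
  + case: e => [[] r] /=; first by left; exists r.
    by case: eqP => _; [right|left; exists r].
  + case: e => s0 r0; case: s; first by left; exists r0.
    by case: eqP => _; left; exists r0.
- case: v => [|[s r] w] /=.
  + case: e => [[] r] /=; last by left; exists r.
    by case: eqP => _; [right|left; exists r].
  + case: e => s0 r0; case: s; last by left; exists r0.
    by case: eqP => _; left; exists r0.
Qed.

Lemma E_actl m n x v w : E v w -> E (actl m n x v) (actl m n x w).
Proof.
case=> [[r ->]|[r ->]].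
- case: (actl_rcons m n x v (true, r)) => [[r' ->]|[-> [h1 h2]]]; first by left; exists r'.
  by right; exists 0%R; rewrite h1 h2.
- case: (actl_rcons m n x w (false, r)) => [[r' ->]|[-> [h1 h2]]]; first by right; exists r'.
  by left; exists 0%R; rewrite h1 h2.
Qed.

Lemma E_act m n u v w : E v w -> E (act m n u v) (act m n u w).
Proof. elim: u => [|x u IH] //= h; exact/E_actl/IH. Qed.

Fixpoint lcp (v w : vtx) : nat :=
  match v, w with
  | x :: v', y :: w' => if x == y then (lcp v' w').+1 else 0
  | _, _ => 0
  end.

Lemma lcp_le1 v w : lcp v w <= size v.
Proof. elim: v w => [|x v IH] [|y w] //=; case: eqP => // _; exact: IH. Qed.
Lemma lcp_le2 v w : lcp v w <= size w.
Proof. elim: v w => [|x v IH] [|y w] //=; case: eqP => // _; exact: IH. Qed.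
Lemma lcp_rcons v e w : lcp v w <= lcp (rcons v e) w <= (lcp v w).+1.
Proof.
elim: v w => [|x v IH] [|y w] //=; first by case: eqP.
by case: eqP => // _; exact: IH.
Qed.
Lemma lcp_refl v : lcp v v = size v.
Proof. by elim: v => //= x v ->; rewrite eqxx. Qed.

Definition dist v w := (size v + size w - 2 * lcp v w)%N.

Lemma dist_E v v' w : E v v' -> dist v w <= (dist v' w).+1.
Proof.
rewrite /dist.
case=> [[r ->]|[r ->]]; rewrite size_rcons.
- have := lcp_rcons v (true, r) w; have := lcp_le1 v w; have := lcp_le2 v w.
  have := lcp_le1 (rcons v (true, r)) w; have := lcp_le2 (rcons v (true, r)) w.
  rewrite size_rcons; lia.
- have := lcp_rcons v' (false, r) w; have := lcp_le1 v' w; have := lcp_le2 v' w.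
  have := lcp_le1 (rcons v' (false, r)) w; have := lcp_le2 (rcons v' (false, r)) w.
  rewrite size_rcons; lia.
Qed.

Lemma dist_path (R : word -> word -> Prop) (f : word -> vtx)
  (hR : forall x y, R x y -> E (f x) (f y)) x p :
  rpath R x p -> dist (f x) (f (last x p)) <= size p.
Proof.
elim: p x => [|y p IH] x /=.
- by move=> _; rewrite /dist lcp_refl; lia.
- case=> hxy hp; have := dist_E (f (last y p)) (hR _ _ hxy); have := IH _ hp; lia.
Qed.

Lemma E_nil w : E [::] w -> exists r, w = [:: (true, r)].
Proof.
case=> [[r ->]|[r]]; first by exists r.
by case: w.
Qed.
Definition winv (w : word) : word := rev (map linv w).

Lemma winv_cancel m n u s : bs_eq m n (winv u ++ u ++ s) s.
Proof.
elim: u s => [|x u IH] s /=; first exact: bs_refl.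
rewrite /winv /= rev_cons -cats1 -/(winv u) -catA /=.
apply: bs_trans (IH s); apply: bs_catl.
have := bs_cons1 m n (linv x) (u ++ s); by rewrite linvK.
Qed.

Lemma int_ind2 (P : int -> Prop) : P 0%R -> (forall q, P q -> P (q + 1)%R) ->
  (forall q, P q -> P (q - 1)%R) -> forall q, P q.
Proof.
move=> h0 hS hP [] j.
- elim: j => // j IH; have := hS _ IH; congr P; lia.
- elim: j => [|j IH]; first by have := hP _ h0; congr P; lia.
  have := hP _ IH; congr P; lia.
Qed.

Lemma apow_add m n k l : bs_eq m n (apow k ++ apow l) (apow (k + l)%R).
Proof. rewrite !apowE; exact: gpow_add. Qed.
Lemma tpow_add m n k l : bs_eq m n (tpow k ++ tpow l) (tpow (k + l)%R).
Proof. rewrite !tpowE; exact: gpow_add. Qed.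

Lemma rel1 m n : bs_eq m n (apow n ++ [:: LT]) (LT :: apow m).
Proof.
have h := bs_rel m n [::] [::]; rewrite /= !cats0 in h.
apply: bs_trans (bs_catr [:: LT] (bs_sym h)) _.
have := bs_cancel m n (LT :: apow m) [::] LTi; rewrite /= !cats0 -catA /=.
by [].
Qed.

Lemma apow_inv m n k s : bs_eq m n (apow k ++ apow (- k)%R ++ s) s.
Proof.
have := bs_catr s (apow_add m n k (- k)%R); rewrite addrN /= -catA; exact.
Qed.
Lemma apow_inv' m n k s : bs_eq m n (apow (- k)%R ++ apow k ++ s) s.
Proof.
have := bs_catr s (apow_add m n (- k)%R k); rewrite addNr /= -catA; exact.
Qed.

Lemma rel1' m n : bs_eq m n (apow (- n)%R ++ [:: LT]) (LT :: apow (- m)%R).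
Proof.
have H := bs_catl (apow (- n)%R ++ [:: LT]) (bs_sym (apow_inv m n m [::])).
rewrite cats0 -!catA in H; apply: bs_trans H _; rewrite /= cats0.
have H2 := bs_catl (apow (- n)%R) (bs_catr (apow (- m)%R) (bs_sym (rel1 m n))).
rewrite -!catA /= in H2; apply: bs_trans H2 _.
exact: apow_inv'.
Qed.

Lemma rel_gen m n q : bs_eq m n (apow (q * n)%R ++ [:: LT]) (LT :: apow (q * m)%R).
Proof.
elim/int_ind2: q.
- by rewrite !mul0r; apply: bs_refl.
- move=> q IH; rewrite !mulrDl !mul1r.
  have H := bs_catr [:: LT] (bs_sym (apow_add m n (q * n)%R n)).
  rewrite -catA in H; apply: bs_trans H _.
  have H2 := bs_catl (apow (q * n)%R) (rel1 m n).
  apply: bs_trans H2 _.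
  have H3 := bs_catr (apow m) IH; rewrite -catA /= in H3; apply: bs_trans H3 _.
  exact: (bs_catl [:: LT] (apow_add m n _ _)).
- move=> q IH; rewrite !mulrBl !mul1r.
  have H := bs_catr [:: LT] (bs_sym (apow_add m n (q * n)%R (- n)%R)).
  rewrite -catA in H; apply: bs_trans H _.
  have H2 := bs_catl (apow (q * n)%R) (rel1' m n).
  apply: bs_trans H2 _.
  have H3 := bs_catr (apow (- m)%R) IH; rewrite -catA /= in H3; apply: bs_trans H3 _.
  exact: (bs_catl [:: LT] (apow_add m n _ _)).
Qed.
Lemma al_refl m n g : in_aline m n g g.
Proof. by apply/in_alineE; apply: in_pow_refl. Qed.
Lemma al_sym m n g h : in_aline m n g h -> in_aline m n h g.
Proof. by move/in_alineE/in_pow_sym/in_alineE. Qed.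
Lemma al_trans m n g h l : in_aline m n g h -> in_aline m n h l -> in_aline m n g l.
Proof. by move=> /in_alineE h1 /in_alineE h2; apply/in_alineE; apply: in_pow_trans h1 h2. Qed.
Lemma al_bs2 m n g h h' : in_aline m n g h -> bs_eq m n h h' -> in_aline m n g h'.
Proof. by case=> k hk e; exists k; apply: bs_trans (bs_sym e) hk. Qed.
Lemma al_bs1 m n g g' h : bs_eq m n g g' -> in_aline m n g h -> in_aline m n g' h.
Proof. by move=> e [k hk]; exists k; apply: bs_trans hk (bs_catr _ e). Qed.
Lemma al_catl m n z g h : in_aline m n g h -> in_aline m n (z ++ g) (z ++ h).
Proof. by move/in_alineE/(in_pow_catl z)/in_alineE. Qed.
Lemma al_ext m n g k : in_aline m n g (g ++ apow k).
Proof. by exists k; apply: bs_refl. Qed.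

Lemma tl_sym m n g h : in_tline m n g h -> in_tline m n h g.
Proof. by move/in_tlineE/in_pow_sym/in_tlineE. Qed.
Lemma tl_trans m n g h l : in_tline m n g h -> in_tline m n h l -> in_tline m n g l.
Proof. by move=> /in_tlineE h1 /in_tlineE h2; apply/in_tlineE; apply: in_pow_trans h1 h2. Qed.

Lemma tedge_l m n a b c : tedge m n a b -> in_aline m n a c -> tedge m n c b.
Proof. by case=> g [h1 h2] h; exists g; split=> //; apply: al_trans (al_sym h) h1. Qed.
Lemma tedge_r m n a b c : tedge m n a b -> in_aline m n b c -> tedge m n a c.
Proof. by case=> g [h1 h2] h; exists g; split=> //; apply: al_trans (al_sym h) h2. Qed.
Lemma tadj_l m n a b c : tadj m n a b -> in_aline m n a c -> tadj m n c b.
Proof. by case=> h e; [left; apply: tedge_l h e|right; apply: tedge_r h e]. Qed.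
Lemma tadj_r m n a b c : tadj m n a b -> in_aline m n b c -> tadj m n a c.
Proof. by case=> h e; [left; apply: tedge_r h e|right; apply: tedge_l h e]. Qed.

Lemma tpow_S m n i : bs_eq m n (tpow i ++ [:: LT]) (tpow (i + 1)%R).
Proof. exact: (tpow_add m n i 1%R). Qed.

Definition pi m n g := act m n g [::].

Section Pi.
Variables (m n : int) (hm : m != 0%R) (hn : n != 0%R).

Lemma pi_bs g h : bs_eq m n g h -> pi m n g = pi m n h.
Proof. by move=> e; apply: bs_act. Qed.

Lemma pi_aline g h : in_aline m n g h -> pi m n g = pi m n h.
Proof. by case=> k hk; rewrite (pi_bs hk) /pi act_cat act_apow. Qed.

Lemma pi_catl z g h : in_aline m n g h -> pi m n (z ++ g) = pi m n (z ++ h).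
Proof. by move=> e; apply: pi_aline; apply: al_catl. Qed.

Lemma E_tedge z l l' : tedge m n l l' -> E (pi m n (z ++ l)) (pi m n (z ++ l')).
Proof.
case=> g [h1 h2]; rewrite (pi_catl z h1) (pi_catl z h2) /pi !act_cat.
by apply: E_act; apply: E_act; left; exists 0%R.
Qed.
End Pi.

Lemma pi_tposE m n d : pi m n (tpow (Posz d)) = nseq d (true, 0%R).
Proof. by elim: d => //= d; rewrite /pi /= => ->; case: d. Qed.
Lemma pi_tnegE m n d : pi m n (tpow (Negz d)) = nseq d.+1 (false, 0%R).
Proof. by elim: d => //= d; rewrite /pi /= => ->. Qed.

Fixpoint tup (h : word) (i : int) (d : nat) : seq word :=
  match d with 0 => [::] | d'.+1 => (h ++ tpow (i + 1)%R) :: tup h (i + 1)%R d' end.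
Fixpoint tdown (h : word) (i : int) (d : nat) : seq word :=
  match d with 0 => [::] | d'.+1 => (h ++ tpow (i - 1)%R) :: tdown h (i - 1)%R d' end.

Lemma size_tup h i d : size (tup h i d) = d.
Proof. by elim: d i => //= d IH i; rewrite IH. Qed.
Lemma size_tdown h i d : size (tdown h i d) = d.
Proof. by elim: d i => //= d IH i; rewrite IH. Qed.

Lemma tup_ok m n h d : forall i u, in_aline m n u (h ++ tpow i) ->
  rpath (tadj m n) u (tup h i d) /\
  in_aline m n (h ++ tpow (i + d%:Z)%R) (last u (tup h i d)).
Proof.
elim: d => [|d IH] i u hu /=.
- by rewrite addr0; split=> //; apply: al_sym.
- have e : bs_eq m n ((h ++ tpow i) ++ [:: LT]) (h ++ tpow (i + 1)%R).
    by rewrite -catA; apply: bs_catl; apply: tpow_S.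
  have [h1 h2] := IH (i + 1)%R (h ++ tpow (i + 1)%R) (al_refl _ _ _).
  split; [split=> //|].
  + left; exists (h ++ tpow i); split=> //.
    by apply: al_bs2 (al_refl _ _ _) (bs_sym e).
  + by rewrite (_ : (i + d.+1%:Z = i + 1 + d%:Z)%R); [|lia].
Qed.

Lemma tdown_ok m n h d : forall i u, in_aline m n u (h ++ tpow i) ->
  rpath (tadj m n) u (tdown h i d) /\
  in_aline m n (h ++ tpow (i - d%:Z)%R) (last u (tdown h i d)).
Proof.
elim: d => [|d IH] i u hu /=.
- by rewrite subr0; split=> //; apply: al_sym.
- have e : bs_eq m n ((h ++ tpow (i - 1)%R) ++ [:: LT]) (h ++ tpow i).
    rewrite -catA; apply: bs_catl.
    by have := tpow_S m n (i - 1)%R; rewrite subrK.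
  have [h1 h2] := IH (i - 1)%R (h ++ tpow (i - 1)%R) (al_refl _ _ _).
  split; [split=> //|].
  + right; exists (h ++ tpow (i - 1)%R); split; first exact: al_refl.
    by apply: al_bs2 hu (bs_sym e).
  + by rewrite (_ : (i - d.+1%:Z = i - 1 - d%:Z)%R); [|lia].
Qed.

Lemma dist_ne x y w : x != y -> dist [:: x] (y :: w) = (size w).+2.
Proof. by move=> ne; rewrite /dist /= (negbTE ne); lia. Qed.
Definition cond3 m n g1 g2 (u3 : lvert) :=
  ~ same_vert m n (VA g1) u3 /\ ~ same_vert m n (VA g2) u3 /\
  forall w : lvert, ladj m n (VA g1) w -> ladj m n (VA g2) w -> ladj m n u3 w.

Lemma cond3_sym m n g1 g2 u : cond3 m n g1 g2 u -> cond3 m n g2 g1 u.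
Proof. by case=> h1 [h2 h3]; split=> //; split=> // w a b; apply: h3. Qed.

Lemma partB (m n : int) (hm : m != 0%R) (hn : n != 0%R) g1 g2 :
  tlt m n g1 g2 -> ~ tadj m n g1 g2 -> exists u3, cond3 m n g1 g2 u3.
Proof.
move=> [[p [[hp1 [hp2 hp3]] hpe]] hne] hnadj.
case: p hp1 hp2 hp3 hpe => [|y1 [|y2 rest]] /= hp1 hp2 hp3 hpe.
- by case: hne; apply: al_sym.
- by case: hnadj; case: hp1 => h _; apply: tadj_r h (al_sym hp2).
exists (VA y1); split; [|split].
- move=> /= h1; have := hp3 (y2 :: rest) => /=.
  case: hp1 => _ [h12 hr].
  have : size (y2 :: rest) < size [:: y1, y2 & rest] by [].
  move=> /= lt H; have := H (conj (tadj_l h12 (al_sym h1)) hr) hp2; lia.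
- move=> /= h2; have := hp3 [:: y1] => /=.
  case: hp1 => h01 _; move=> H; have := H (conj h01 I) h2; lia.
case=> [h|h] /=.
- case=> hne1 [x [hx1 hx2]] _; exfalso; apply: hne1.
  exact: al_trans hx1 (al_sym hx2).
case=> _ [x1 [ha1 [i hi]]] [_ [x2 [ha2 [j hj]]]]; split; first by [].
pose z := tpow (- i)%R ++ winv h.
have zh : forall s, bs_eq m n (z ++ h ++ tpow i ++ s) s.
  move=> s; rewrite /z -catA.
  apply: bs_trans (bs_catl _ (winv_cancel m n h _)) _.
  have := tpow_add m n (- i)%R i; rewrite addNr => e.
  by have := bs_catr s e; rewrite -catA.
have r2 : pi m n (z ++ g2) = pi m n (tpow (j - i)%R).
  rewrite (pi_catl hm hn z ha2) (pi_bs hm hn (bs_catl z hj)) /z -catA.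
  apply: (pi_bs hm hn).
  apply: bs_trans (bs_catl _ (winv_cancel m n h _)) _.
  have := tpow_add m n (- i)%R j; rewrite addrC; exact.
case: hpe => hte hpe.
case: (hte) => g [hg1 hg2].
have hgi : in_aline m n (h ++ tpow i) g.
  by apply: al_bs1 hi (al_trans (al_sym ha1) hg1).
case: hgi => c hc; rewrite -catA in hc.
have r3 : pi m n (z ++ y1) = [:: (true, modz c n)].
  rewrite (pi_catl hm hn z hg2) (pi_bs hm hn (bs_catl z (bs_catr [:: LT] hc))).
  have := zh (apow c ++ [:: LT]); rewrite /z -!catA => e.
  rewrite (pi_bs hm hn e) /pi act_cat (act_apow hm hn) /=; last by rewrite normr_gt0.
  by apply: (f_equal (fun k => [:: (true, modz k n)])); lia.
have dd := dist_path (E_tedge hm hn z) (hpe : rpath (tedge m n) y1 (y2 :: rest)).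
rewrite /= -(pi_catl hm hn z hp2) r2 r3 in dd.
have hcz : modz c n = 0%R.
  case: (eqVneq (modz c n) 0%R) => // hcn; exfalso.
  have ha1' : in_aline m n g1 (h ++ tpow i) by apply: al_bs2 ha1 hi.
  have ha2' : in_aline m n g2 (h ++ tpow j) by apply: al_bs2 ha2 hj.
  case hD: (j - i)%R => [d|d]; rewrite hD in dd.
  + have [q1 q2] := @tup_ok m n h d _ _ ha1'.
    rewrite (_ : (i + d%:Z = j)%R) in q2; last by lia.
    have := hp3 _ q1 (al_trans ha2' q2); rewrite size_tup /= => hs.
    rewrite pi_tposE in dd.
    clear q1 q2; case: d hD hs dd => [|d] hD hs dd; first by [].
    rewrite /= dist_ne in dd; last by apply/eqP; case=> /eqP; rewrite (negbTE hcn).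
    rewrite size_nseq in dd; lia.
  + have [q1 q2] := @tdown_ok m n h d.+1 _ _ ha1'.
    rewrite (_ : (i - d.+1%:Z = j)%R) in q2; last by lia.
    have := hp3 _ q1 (al_trans ha2' q2); rewrite size_tdown /= => hs.
    rewrite pi_tnegE /= dist_ne // size_nseq in dd; lia.
exists (h ++ tpow (i + 1)%R); split; last by exists (i + 1)%R; apply: bs_refl.
have ec : c = (divz c n * n)%R by rewrite {1}(divz_eq c n) hcz addr0.
apply: al_trans (al_bs2 hg2 _) (al_sym (al_ext _ _ _ (divz c n * m)%R)).
apply: bs_trans (bs_catr _ hc) _; rewrite -!catA; apply: bs_catl.
rewrite {1}ec; apply: bs_trans (bs_catl _ (rel_gen m n _)) _.
by have := bs_catr (apow (divz c n * m)%R) (tpow_S m n i); rewrite -catA.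
Qed.
Lemma tl_refl m n g : in_tline m n g g.
Proof. by apply/in_tlineE; apply: in_pow_refl. Qed.
Lemma tl_ext m n g k : in_tline m n g (g ++ tpow k).
Proof. by exists k; apply: bs_refl. Qed.

Lemma partA (m n : int) (hm : m != 0%R) (hn : n != 0%R)
  (hmn : modz m n != 0%R) (hnm : modz n m != 0%R) g1 g2 :
  tedge m n g1 g2 -> ~ exists u3, cond3 m n g1 g2 u3.
Proof.
case=> g [hk1 hk2] [u3 [hu1 [hu2 H]]].
have a0 : ladj m n (VA g1) (VT g).
  by split; [by []|exists g; split; [exact: hk1|exact: tl_refl]].
have b0 : ladj m n (VA g2) (VT g).
  by split; [by []|exists (g ++ [:: LT]); split; [exact: hk2|by exists (Posz 1); apply: bs_refl]].
have a1 : ladj m n (VA g1) (VT (g ++ apow n)).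
  split; [by []|exists (g ++ apow n); split; [|exact: tl_refl]].
  exact: al_trans hk1 (al_ext _ _ _ _).
have b1 : ladj m n (VA g2) (VT (g ++ apow n)).
  split; [by []|exists ((g ++ apow n) ++ [:: LT]); split; [|by exists (Posz 1); apply: bs_refl]].
  apply: al_bs2 (al_trans hk2 (al_ext _ _ _ m)) _.
  by rewrite -!catA; apply: bs_catl; apply: bs_sym (rel1 m n).
case: u3 hu1 hu2 H => [y|h] /= hu1 hu2 H; last first.
  have [hne [x [hx1 hx2]]] := H _ a0 b0.
  by apply: hne; apply: tl_trans hx1 (tl_sym hx2).
have [_ [x0 [hy0 [j0 hj0]]]] := H _ a0 b0.
have [_ [x1 [hy1 [j1 hj1]]]] := H _ a1 b1.
pose z := winv g.
have P0 : pi m n (z ++ y) = pi m n (tpow j0).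
  rewrite (pi_catl hm hn z hy0) (pi_bs hm hn (bs_catl z hj0)).
  exact: (pi_bs hm hn (winv_cancel _ _ _ _)).
have P1 : pi m n (z ++ y) = add m n n (pi m n (tpow j1)).
  rewrite (pi_catl hm hn z hy1) (pi_bs hm hn (bs_catl z hj1)) -catA.
  rewrite (pi_bs hm hn (winv_cancel _ _ _ _)) /pi act_cat (act_apow hm hn) //.
  exact: nrm_act.
have P := etrans (esym P0) P1; clear P0 P1.
case: j0 hj0 P => [[|[|d0]]|d0] hj0 P.
- apply: hu1; apply: al_trans hk1 (al_sym _).
  by apply: al_bs2 hy0 _; rewrite /= cats0 in hj0.
- by apply: hu2; apply: al_trans hk2 (al_sym (al_bs2 hy0 hj0)).
- rewrite pi_tposE in P; clear hj0.
  case: j1 {hj1} P => [[|[|d1]]|d1]; rewrite ?pi_tposE ?pi_tnegE /= => P //;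
    try by case: P => _ /esym; case: d0.
  case: P => _ e2 _; move/eqP: hmn; apply.
  by rewrite e2 !add0r divzz hn mul1r.
- rewrite pi_tnegE in P; clear hj0.
  case: j1 {hj1} P => [[|d1]|d1]; rewrite ?pi_tposE ?pi_tnegE /= => P //.
  case: P => e1 _; move/eqP: hnm; apply.
  by rewrite e1 add0r.
Qed.

Lemma tadj_sym m n a b : tadj m n a b -> tadj m n b a.
Proof. by case=> h; [right|left]. Qed.
Local Open Scope ring_scope.

Theorem lemma3p8 (m n : int) (hm : m != 0) (hn : n != 0)
  (hmn : `|m| < `|n|) (hdiv : ~~ (m %| n)%Z) (g1 g2 : word) :
  tlt m n g1 g2 \/ tlt m n g2 g1 ->
  (tadj m n g1 g2 <->
   ~ (exists u3 : lvert,
        ~ same_vert m n (VA g1) u3 /\ ~ same_vert m n (VA g2) u3 /\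
        forall w : lvert, ladj m n (VA g1) w -> ladj m n (VA g2) w ->
                          ladj m n u3 w)).
Proof.
have hnm' : modz n m != 0 by apply: contra hdiv => /eqP /dvdz_mod0P.
have hmn' : modz m n != 0.
  apply/eqP => h0; have e := divz_eq m n; rewrite h0 addr0 in e.
  have hq : divz m n != 0 by apply: contraNneq hm => hq; rewrite e hq mul0r.
  have e2 : `|m| = `|divz m n| * `|n| by rewrite {1}e normrM.
  have h1 : 1 <= `|divz m n| by rewrite -gtz0_ge1 normr_gt0.
  have h3 : 0 <= `|n| by [].
  move: hmn; rewrite e2; move: h1 h3; set A := `|divz m n|; set B := `|n|.
  by move=> h1 h3; nia.
move=> hlt; split.
- case=> [he|he]; first exact: (partA hm hn hmn' hnm' he).
  move=> [u3 hu]; apply: (partA hm hn hmn' hnm' he); exists u3; exact: cond3_sym.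
- move=> hno; apply: Classical_Prop.NNPP => hna; case: hlt => hl.
  + exact: hno (partB hm hn hl hna).
  + have hna' : ~ tadj m n g2 g1 by move/tadj_sym.
    case: (partB hm hn hl hna') => u hu; apply: hno; exists u; exact: cond3_sym hu.
Qed.
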